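(* The equations (F1) $\mathsf F=\neg\mathsf T$ and (F3) $\neg\neg x=x$ are derivable in equational logic from the set $\{\text{(F2)},\text{(F4)},\text{(F5)},\text{(F6)},\text{(F7)},\text{(F9)}\}$ (i.e. from $\mathrm{EqFSCL}^-\setminus\{\text{(F8)},\text{(F10)}\}$).
   Context: Let $A$ be a nonempty set of atoms. Terms are over the signature with constants $\mathsf T,\mathsf F$, atoms $a\in A$, unary $\neg$, binary $\land^\circ$ and $\lor^\circ$. The equations are: (F2) $x\lor^\circ y=\neg(\neg x\land^\circ\neg y)$; (F4) $\mathsf T\land^\circ x=x$; (F5) $x\lor^\circ\mathsf F=x$; (F6) $\mathsf F\land^\circ x=\mathsf F$; (F7) $(x\land^\circ y)\land^\circ z=x\land^\circ(y\land^\circ z)$; (F8) $\neg x\land^\circ\mathsf F=x\land^\circ\mathsf F$; (F9) $(x\land^\circ\mathsf F)\lor^\circ y=(x\lor^\circ\mathsf T)\land^\circ y$; (F10) $(x\land^\circ y)\lor^\circ(z\land^\circ\mathsf F)=(x\lor^\circ(z\land^\circ\mathsf F))\land^\circ(y\lor^\circ(z\land^\circ\mathsf F))$. $\mathrm{EqFSCL}^-$ is the set $\{\text{(F2)},\text{(F4)},\ldots,\text{(F10)}\}$. *)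

(* Defs.v *)
Set Implicit Arguments.

(* Terms over the signature T, F, atoms a in A, unary neg, binary and/or
   (the left-sequential connectives), with variables indexed by nat. *)
Inductive term (A : Type) : Type :=
| Var : nat -> term A
| Tc : term A
| Fc : term A
| Atom : A -> term A
| Neg : term A -> term A
| LAnd : term A -> term A -> term A
| LOr : term A -> term A -> term A.

Arguments Tc {A}.
Arguments Fc {A}.

Fixpoint subst (A : Type) (s : nat -> term A) (t : term A) : term A :=
  match t with
  | Var _ n => s n
  | Tc => Tc
  | Fc => Fc
  | Atom a => Atom a
  | Neg u => Neg (subst s u)
  | LAnd u v => LAnd (subst s u) (subst s v)
  | LOr u v => LOr (subst s u) (subst s v)
  end.

Definition eqn (A : Type) := (term A * term A)%type.

Inductive derivable (A : Type) (E : eqn A -> Prop) : term A -> term A -> Prop :=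
| d_ax : forall l r (s : nat -> term A), E (l, r) -> derivable E (subst s l) (subst s r)
| d_refl : forall t, derivable E t t
| d_sym : forall t u, derivable E t u -> derivable E u t
| d_trans : forall t u v, derivable E t u -> derivable E u v -> derivable E t v
| d_neg : forall t u, derivable E t u -> derivable E (Neg t) (Neg u)
| d_and : forall t1 t2 u1 u2, derivable E t1 u1 -> derivable E t2 u2 ->
            derivable E (LAnd t1 t2) (LAnd u1 u2)
| d_or : forall t1 t2 u1 u2, derivable E t1 u1 -> derivable E t2 u2 ->
            derivable E (LOr t1 t2) (LOr u1 u2).

Section Eqns.
Variable A : Type.
Local Notation x := (Var A 0).
Local Notation y := (Var A 1).
Local Notation z := (Var A 2).

Definition F1 : eqn A := (Fc, Neg Tc).
Definition F2 : eqn A := (LOr x y, Neg (LAnd (Neg x) (Neg y))).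
Definition F3 : eqn A := (Neg (Neg x), x).
Definition F4 : eqn A := (LAnd Tc x, x).
Definition F5 : eqn A := (LOr x Fc, x).
Definition F6 : eqn A := (LAnd Fc x, Fc).
Definition F7 : eqn A := (LAnd (LAnd x y) z, LAnd x (LAnd y z)).
Definition F8 : eqn A := (LAnd (Neg x) Fc, LAnd x Fc).
Definition F9 : eqn A := (LOr (LAnd x Fc) y, LAnd (LOr x Tc) y).
Definition F10 : eqn A :=
  (LOr (LAnd x y) (LAnd z Fc),
   LAnd (LOr x (LAnd z Fc)) (LOr y (LAnd z Fc))).

Definition EqFSCLm (e : eqn A) : Prop :=
  e = F2 \/ e = F4 \/ e = F5 \/ e = F6 \/ e = F7 \/ e = F8 \/ e = F9 \/ e = F10.

Definition EqFSCLm_noF8F10 (e : eqn A) : Prop :=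
  e = F2 \/ e = F4 \/ e = F5 \/ e = F6 \/ e = F7 \/ e = F9.
End Eqns.

(* Main.v *)
Require Import Defs.

Section P.
Variable A : Type.
Local Notation D := (derivable (@EqFSCLm_noF8F10 A)).
Definition s3 (a b c : term A) : nat -> term A :=
  fun n => match n with 0 => a | 1 => b | _ => c end.
Local Notation N := (Neg (@Fc A)).

Lemma ax2 a b : D (LOr a b) (Neg (LAnd (Neg a) (Neg b))).
Proof. exact (d_ax _ _ _ (s3 a b a) (or_introl eq_refl)). Qed.
Lemma ax4 a : D (LAnd Tc a) a.
Proof. exact (d_ax _ _ _ (s3 a a a) (or_intror (or_introl eq_refl))). Qed.
Lemma ax5 a : D (LOr a Fc) a.
Proof. exact (d_ax _ _ _ (s3 a a a) (or_intror (or_intror (or_introl eq_refl)))). Qed.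
Lemma ax6 a : D (LAnd Fc a) Fc.
Proof. exact (d_ax _ _ _ (s3 a a a) (or_intror (or_intror (or_intror (or_introl eq_refl))))). Qed.
Lemma ax9 a b : D (LOr (LAnd a Fc) b) (LAnd (LOr a Tc) b).
Proof. exact (d_ax _ _ _ (s3 a b a) (or_intror (or_intror (or_intror (or_intror (or_intror eq_refl)))))). Qed.

Lemma h1 a : D a (Neg (LAnd (Neg a) N)).
Proof. eapply d_trans. apply d_sym, ax5. apply ax2. Qed.

Lemma h2 b : D (Neg (LAnd b N)) (LAnd (Neg b) N).
Proof.
  apply d_sym. eapply d_trans. apply h1.
  apply d_neg, d_and; [|apply d_refl]. apply d_sym, h1.
Qed.

Lemma h3 : D (LAnd N N) N.
Proof. eapply d_trans. apply d_sym, h2. apply d_neg, ax6. Qed.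

Lemma h4 : D Fc (Neg N).
Proof. eapply d_trans. apply h1. apply d_neg, h3. Qed.

Lemma h5 : D (LAnd (Neg Tc) N) Fc.
Proof.
  eapply d_trans. apply d_sym, h2. eapply d_trans. apply d_neg, ax4.
  apply d_sym, h4.
Qed.

Lemma h6 : D Tc N.
Proof. eapply d_trans. apply h1. apply d_neg, h5. Qed.

Lemma f1 : D Fc (Neg Tc).
Proof. eapply d_trans. apply h4. apply d_neg, d_sym, h6. Qed.

Lemma f3 (x : term A) : D (Neg (Neg x)) x.
Proof.
  eapply d_trans. apply d_neg, d_sym, ax4.
  eapply d_trans. apply d_neg, d_and. apply h6. apply d_refl.
  eapply d_trans. apply d_sym, ax2.
  eapply d_trans. apply d_or. apply d_sym, (ax6 Fc). apply d_refl.
  eapply d_trans. apply ax9.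
  eapply d_trans. apply d_and; [|apply d_refl].
  - eapply d_trans. apply ax2.
    eapply d_trans. apply d_neg, d_and. apply d_sym, h6. apply d_sym, f1.
    eapply d_trans. apply d_neg, ax4. apply d_sym, h6.
  - apply ax4.
Qed.
End P.

Theorem proposition2p7 (A : Type) (Hne : inhabited A) :
  derivable (@EqFSCLm_noF8F10 A) (fst (F1 A)) (snd (F1 A)) /\
  derivable (@EqFSCLm_noF8F10 A) (fst (F3 A)) (snd (F3 A)).
Proof.
  split. apply f1. apply f3.
Qed.
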